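(* Let $N,M\ge 1$, let $\delta\in(0,1)$, $\eta>0$ and $\epsilon\ge 0$. Let $\mathbf x_\star\in\mathbb C^N$ with $\|\mathbf x_\star\|_2=1$, let $\mathbf a_1,\dots,\mathbf a_M\in\mathbb C^N$, and let $b_i=|\mathbf a_i^*\mathbf x_\star|^2+\xi_i$ for $1\le i\le M$, where $\xi_i\in[0,\eta^{-1}]$. Let $\mathbf a_0\in\mathbb C^N\setminus\{\mathbf 0\}$ be such that $\mathbf a_0^*\mathbf x_\star$ is a positive real number and $|\mathbf a_0^*\mathbf x_\star|\ge\delta\|\mathbf a_0\|_2\|\mathbf x_\star\|_2$. Define $$\mathcal R_\delta=\left\{\mathbf h\in\mathbb C^N:\ \big\|\mathbf h-(\mathbf x_\star^*\mathbf h)\mathbf x_\star\big\|_2\ge\delta\,\big|\mathrm{Im}(\mathbf x_\star^*\mathbf h)\big|\right\}.$$ Suppose that every $\mathbf h\in\mathcal R_\delta$ with $\|\mathbf h\|_2>\epsilon$ violates at least one of the inequalities $$\langle\mathbf a_0,\mathbf h\rangle\ge 0,\qquad \langle\mathbf a_i\mathbf a_i^*\mathbf x_\star,\mathbf h\rangle\le\tfrac12\eta^{-1}\quad(1\le i\le M).$$ Then every solution $\widehat{\mathbf x}$ of the convex program $$\max_{\mathbf x\in\mathbb C^N}\ \langle\mathbf a_0,\mathbf x\rangle\quad\text{subject to}\quad|\mathbf a_i^*\mathbf x|^2\le b_i,\ 1\le i\le M,$$ satisfies $\|\widehat{\mathbf x}-\mathbf x_\star\|_2\le\epsilon$.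
   Context: $\mathbb C^N$ is regarded as a $2N$-dimensional real inner-product space with inner product $\langle\mathbf x_1,\mathbf x_2\rangle=\mathrm{Re}(\mathbf x_1^*\mathbf x_2)$. $\mathbf x^*$ denotes the conjugate transpose. *)

(* Defs.v *)
(* C^N is modelled as column vectors 'cV[C]_N over an
   arbitrary numClosedFieldType C (e.g. the complex numbers). *)
From HB Require Import structures.
From mathcomp Require Import all_boot all_order all_algebra.
Set Implicit Arguments. Unset Strict Implicit. Unset Printing Implicit Defensive.
Import Order.TTheory GRing.Theory Num.Theory.
Local Open Scope ring_scope.

Definition cdot (C : numClosedFieldType) (N : nat) (x y : 'cV[C]_N) : C :=
  \sum_(i < N) (x i 0)^* * y i 0.

Definition rinner (C : numClosedFieldType) (N : nat) (x y : 'cV[C]_N) : C :=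
  'Re (cdot x y).

Definition norm2 (C : numClosedFieldType) (N : nat) (x : 'cV[C]_N) : C :=
  sqrtC (\sum_(i < N) `|x i 0| ^+ 2).

Definition Rdelta (C : numClosedFieldType) (N : nat) (delta : C) (xs : 'cV[C]_N) :
  'cV[C]_N -> Prop :=
  fun h => delta * `|'Im (cdot xs h)| <= norm2 (h - cdot xs h *: xs).

Definition feasible (C : numClosedFieldType) (N M : nat)
  (a : 'I_M -> 'cV[C]_N) (b : 'I_M -> C) (x : 'cV[C]_N) : Prop :=
  forall i : 'I_M, `|cdot (a i) x| ^+ 2 <= b i.

Definition is_solution (C : numClosedFieldType) (N M : nat) (a0 : 'cV[C]_N)
  (a : 'I_M -> 'cV[C]_N) (b : 'I_M -> C) (xhat : 'cV[C]_N) : Prop :=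
  feasible a b xhat /\
  forall x, feasible a b x -> rinner a0 x <= rinner a0 xhat.

(* Main.v *)
Require Import Defs.
From HB Require Import structures.
From mathcomp Require Import all_boot all_order all_algebra.
Import Order.TTheory GRing.Theory Num.Theory.
Local Open Scope ring_scope.
From mathcomp.algebra_tactics Require Import ring.

Section H.
Variables (C : numClosedFieldType) (N : nat).
Implicit Types (x y z : 'cV[C]_N) (c : C).

Lemma cdotDr x y z : cdot x (y + z) = cdot x y + cdot x z.
Proof. by rewrite /cdot -big_split; apply: eq_bigr => i _; rewrite mxE mulrDr. Qed.
Lemma cdotBr x y z : cdot x (y - z) = cdot x y - cdot x z.
Proof. by rewrite /cdot -sumrB; apply: eq_bigr => i _; rewrite !mxE mulrBr. Qed.
Lemma cdotZr x y c : cdot x (c *: y) = c * cdot x y.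
Proof. by rewrite /cdot mulr_sumr; apply: eq_bigr => i _; rewrite mxE mulrCA. Qed.
Lemma cdotBl x y z : cdot (x - y) z = cdot x z - cdot y z.
Proof. by rewrite /cdot -sumrB; apply: eq_bigr => i _; rewrite !mxE rmorphB mulrBl. Qed.
Lemma cdotZl x y c : cdot (c *: x) y = c^* * cdot x y.
Proof. by rewrite /cdot mulr_sumr; apply: eq_bigr => i _; rewrite mxE rmorphM mulrA. Qed.
Lemma cdotC x y : (cdot x y)^* = cdot y x.
Proof. by rewrite /cdot rmorph_sum; apply: eq_bigr => i _; rewrite rmorphM /= conjCK mulrC. Qed.
Lemma cdotxx x : cdot x x = \sum_(i < N) `|x i 0| ^+ 2.
Proof. by apply: eq_bigr => i _; rewrite normCKC. Qed.
Lemma cdotxx_ge0 x : 0 <= cdot x x.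
Proof. by rewrite cdotxx sumr_ge0 // => i _; rewrite exprn_ge0. Qed.
Lemma cdotxx_norm2 x : cdot x x = norm2 x ^+ 2.
Proof. by rewrite /norm2 sqrtCK cdotxx. Qed.
Lemma norm2_ge0 x : 0 <= norm2 x.
Proof. by rewrite /norm2 sqrtC_ge0 -cdotxx cdotxx_ge0. Qed.
Lemma cdotxx_eq0 x y : cdot x x = 0 -> cdot x y = 0.
Proof.
rewrite cdotxx => /psumr_eq0P H.
rewrite /cdot big1 // => i _.
have /eqP := H (fun j _ => exprn_ge0 _ (normr_ge0 _)) i isT.
by rewrite expf_eq0 /= normr_eq0 => /eqP ->; rewrite rmorph0 mul0r.
Qed.

Lemma CS2 x y : `|cdot x y| ^+ 2 <= cdot x x * cdot y y.
Proof.
set s := cdot x x; set c := cdot x y.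
have s0 : 0 <= s by apply: cdotxx_ge0.
have [se0|sn0] := eqVneq s 0.
  by rewrite /c cdotxx_eq0 // normr0 expr0n /= se0 mul0r.
have sp : 0 < s by rewrite lt_def sn0 s0.
have := cdotxx_ge0 (s *: y - c *: x).
rewrite !(cdotBl, cdotBr, cdotZl, cdotZr) -/s -/c -(cdotC x y) -/c.
rewrite (geC0_conj s0).
have -> : s * (s * cdot y y - c * c^*) - c^* * (s * c - c * s)
          = s * (s * cdot y y - c * c^*) by rewrite [c * s]mulrC subrr mulr0 subr0.
by rewrite pmulr_rge0 // subr_ge0 -normCK.
Qed.

Lemma CS x y : `|cdot x y| <= norm2 x * norm2 y.
Proof.
rewrite -(ler_pXn2r (_ : 0 < 2)%N) ?nnegrE ?mulr_ge0 ?norm2_ge0 //.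
by rewrite exprMn -!cdotxx_norm2 CS2.
Qed.
End H.
Theorem lemma1 (C : numClosedFieldType) (N M : nat) (hN : (0 < N)%N) (hM : (0 < M)%N)
  (delta eta eps : C)
  (hdelta0 : 0 < delta) (hdelta1 : delta < 1) (heta : 0 < eta) (heps : 0 <= eps)
  (xs : 'cV[C]_N) (hxs : norm2 xs = 1)
  (a : 'I_M -> 'cV[C]_N) (xi : 'I_M -> C)
  (hxi : forall i, 0 <= xi i /\ xi i <= eta^-1)
  (b : 'I_M -> C) (hb : forall i, b i = `|cdot (a i) xs| ^+ 2 + xi i)
  (a0 : 'cV[C]_N) (ha0 : a0 != 0)
  (ha0pos : 0 < cdot a0 xs)
  (ha0delta : delta * norm2 a0 * norm2 xs <= `|cdot a0 xs|)
  (hcone : forall h : 'cV[C]_N, Rdelta delta xs h -> eps < norm2 h ->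
     ~ (0 <= rinner a0 h /\
        forall i, rinner (cdot (a i) xs *: a i) h <= 2^-1 * eta^-1)) :
  forall xhat : 'cV[C]_N, is_solution a0 a b xhat -> norm2 (xhat - xs) <= eps.
Proof.
move=> xhat [fe opt].
have fxs : feasible a b xs by move=> i; rewrite hb lerDl; case: (hxi i).
set h := xhat - xs.
have hxhat : xhat = xs + h by rewrite /h addrC subrK.
have c0r : cdot a0 xs \is Num.real := gtr0_real ha0pos.
have H1 : 0 <= rinner a0 h.
  by rewrite /rinner /h cdotBr raddfB subr_ge0; exact: opt xs fxs.
have H2 : forall i, rinner (cdot (a i) xs *: a i) h <= 2^-1 * eta^-1.
  move=> i; set c := cdot (a i) xs; set d := cdot (a i) h.
  have := fe i; rewrite hb hxhat cdotDr -/c -/d.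
  rewrite /rinner cdotZl -/d.
  have E : `|c + d| ^+ 2 = `|c| ^+ 2 + 2 * 'Re (c^* * d) + `|d| ^+ 2.
    rewrite !normCK ReE rmorphD /= rmorphM /= conjCK.
    by field.
  rewrite E -addrA lerD2l => H.
  have H' : 2 * 'Re (c^* * d) <= eta^-1.
    apply: (le_trans _ (proj2 (hxi i))).
    apply: (le_trans _ H); rewrite lerDl; exact: exprn_ge0 (normr_ge0 _).
  rewrite -(ler_pM2l (_ : 0 < 2)) ?ltr0n //; apply: (le_trans H').
  by rewrite mulrA mulfV ?pnatr_eq0 // mul1r lexx.
have H3 : 'Im (cdot a0 xhat) = 0.
  set z := cdot a0 xhat.
  have Hz : `|z| <= 'Re z.
    have [z0|zn0] := eqVneq z 0; first by rewrite z0 normr0 raddf0.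
    pose u := z^* / `|z|.
    have nz : `|z| != 0 by rewrite normr_eq0.
    have un : `|u| = 1 by rewrite /u normrM normfV norm_conjC normr_id mulfV.
    have fu : feasible a b (u *: xhat).
      by move=> i; rewrite cdotZr normrM un mul1r; exact: fe i.
    have := opt _ fu; rewrite /rinner cdotZr -/z.
    have -> : u * z = `|z|.
      by rewrite /u mulrAC -normCKC expr2 mulfK.
    by move/Creal_ReP: (normr_real z) => ->.
  have Rz : 0 <= 'Re z := le_trans (normr_ge0 _) Hz.
  have := normC2_Re_Im z.
  have Hz2 : `|z| ^+ 2 <= 'Re z ^+ 2 by apply: lerXn2r; rewrite ?nnegrE.
  move=> E; move: Hz2; rewrite E -(real_normK (Creal_Im z)) gerDl => H.
  apply/eqP; rewrite -normr_eq0 -sqrf_eq0.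
  by rewrite eq_le H exprn_ge0 ?normr_ge0.
have H4 : Rdelta delta xs h.
  rewrite /Rdelta; set al := cdot xs h; set w := h - al *: xs.
  set c0 := cdot a0 xs.
  have Ew : cdot a0 w = cdot a0 h - al * c0 by rewrite /w cdotBr cdotZr.
  have Ih : 'Im (cdot a0 h) = 0.
    by rewrite /h cdotBr raddfB /= H3 (Creal_ImP _ c0r) subrr.
  have Iw : `|'Im (cdot a0 w)| = c0 * `|'Im al|.
    rewrite Ew raddfB /= Ih sub0r (ImMr c0r) normrN normrM (gtr0_norm ha0pos).
    by rewrite mulrC.
  have Iq : `|'Im (cdot a0 w)| <= `|cdot a0 w|.
    rewrite -(ler_pXn2r (_ : 0 < 2)%N) ?nnegrE ?normr_ge0 //.
    by rewrite (real_normK (Creal_Im (cdot a0 w))) (normC2_Re_Im (cdot a0 w)) lerDr real_exprn_even_ge0 ?Creal_Re.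
  have K : c0 * (delta * `|'Im al|) <= c0 * norm2 w.
    rewrite mulrCA -Iw.
    apply: (le_trans (ler_wpM2l (ltW hdelta0) (le_trans Iq (CS _ _ a0 w)))).
    rewrite mulrA; apply: ler_wpM2r; first exact: norm2_ge0.
    by move: ha0delta; rewrite hxs mulr1 (gtr0_norm ha0pos).
  by rewrite ler_pM2l in K.
rewrite real_leNgt ?ger0_real ?norm2_ge0 //; apply/negP => lt.
exact: (hcone h H4 lt (conj H1 H2)).
Qed.
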